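(* If $M\subseteq\mathbb{N}$ is a finite strongly 3-separating set, then there exists $x\in\mathbb{N}\setminus M$ such that $M\cup\{x\}$ is also strongly 3-separating.
   Context: $\mathbb{N}=\{1,2,3,\dots\}$. A set $M\subseteq\mathbb{N}$ is 3-separating if $|M|\geq 3$ and for any two triples $(m_1,m_2,m_3)$ and $(n_1,n_2,n_3)$, each consisting of three distinct elements of $M$, we have $n_2(m_3-m_1)=n_1(m_3-m_2)+n_3(m_2-m_1)$ if and only if $(m_1,m_2,m_3)=(n_1,n_2,n_3)$. A set $M$ is strongly 3-separating if it is 3-separating and moreover for any two pairs $(m_1,m_2)$, $(n_1,n_2)$, each consisting of two distinct elements of $M$, we have $m_1-m_2+n_2-n_1=0$ if and only if $(m_1,m_2)=(n_1,n_2)$. *)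

(* Defs.v *)
From HB Require Import structures.
From mathcomp Require Import all_boot all_order all_algebra.
From mathcomp Require Import finmap.
Set Implicit Arguments. Unset Strict Implicit. Unset Printing Implicit Defensive.
Import Order.TTheory GRing.Theory Num.Theory.
Local Open Scope fset_scope.
Local Open Scope ring_scope.

Definition three_separating (M : {fset nat}) : Prop :=
  (3 <= #|` M|)%N /\
  forall m1 m2 m3 n1 n2 n3 : nat,
    m1 \in M -> m2 \in M -> m3 \in M ->
    m1 != m2 -> m1 != m3 -> m2 != m3 ->
    n1 \in M -> n2 \in M -> n3 \in M ->
    n1 != n2 -> n1 != n3 -> n2 != n3 ->
    ((n2%:Z * (m3%:Z - m1%:Z) = n1%:Z * (m3%:Z - m2%:Z) + n3%:Z * (m2%:Z - m1%:Z))
     <-> (m1, m2, m3) = (n1, n2, n3)).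

Definition strongly_three_separating (M : {fset nat}) : Prop :=
  three_separating M /\
  forall m1 m2 n1 n2 : nat,
    m1 \in M -> m2 \in M -> m1 != m2 ->
    n1 \in M -> n2 \in M -> n1 != n2 ->
    ((m1%:Z - m2%:Z + n2%:Z - n1%:Z = 0) <-> (m1, m2) = (n1, n2)).

(* Main.v *)
Require Import Defs.
From mathcomp Require Import all_boot all_order all_algebra.
From mathcomp Require Import finmap.
From mathcomp Require Import zify ring.
From Stdlib Require Import Lia.
Import GRing.Theory.

Section Aux.
Local Open Scope ring_scope.
Lemma new3 (x K : nat) (S : nat -> Prop)
  (old3 : forall m1 m2 m3 n1 n2 n3 : nat,
    S m1 -> S m2 -> S m3 -> m1 != m2 -> m1 != m3 -> m2 != m3 ->
    S n1 -> S n2 -> S n3 -> n1 != n2 -> n1 != n3 -> n2 != n3 ->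
    (n2%:Z * (m3%:Z - m1%:Z) = n1%:Z * (m3%:Z - m2%:Z) + n3%:Z * (m2%:Z - m1%:Z)) ->
     (m1, m2, m3) = (n1, n2, n3))
  (sid : forall m1 m2 n1 n2 : nat, S m1 -> S m2 -> m1 != m2 -> S n1 -> S n2 -> n1 != n2 ->
    (m1%:Z - m2%:Z + n2%:Z - n1%:Z = 0) -> (m1, m2) = (n1, n2))
  (HK : forall v, S v -> (v <= K)%N) (Hx : (2*K*K + 2*K < x)%N) :
  forall m1 m2 m3 n1 n2 n3 : nat,
    m1 = x \/ S m1 -> m2 = x \/ S m2 -> m3 = x \/ S m3 ->
    m1 != m2 -> m1 != m3 -> m2 != m3 ->
    n1 = x \/ S n1 -> n2 = x \/ S n2 -> n3 = x \/ S n3 -> n1 != n2 -> n1 != n3 -> n2 != n3 ->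
    (n2%:Z * (m3%:Z - m1%:Z) = n1%:Z * (m3%:Z - m2%:Z) + n3%:Z * (m2%:Z - m1%:Z)) ->
     (m1, m2, m3) = (n1, n2, n3).
Proof.
have HS : forall v, v = x \/ S v -> v = x \/ (S v /\ (v <= K)%N).
  by move=> v [->|h]; [left|right; split => //; apply: HK].
move=> m1 m2 m3 n1 n2 n3 /HS [->|[hm1 b1]] /HS [->|[hm2 b2]] /HS [->|[hm3 b3]] d12 d13 d23
  /HS [->|[hn1 c1]] /HS [->|[hn2 c2]] /HS [->|[hn3 c3]] e12 e13 e23 E;
  rewrite ?eqxx in d12 d13 d23 e12 e13 e23 |- *;
  try discriminate.
all: try (by apply: (old3 _ _ _ _ _ _ hm1 hm2 hm3 d12 d13 d23 hn1 hn2 hn3 e12 e13 e23 E)).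
all: try (match goal with
   | |- (?p, ?a, ?b) = (?p, ?c, ?d) => 
       have [/(sid a b c d ltac:(assumption) ltac:(assumption) ltac:(assumption) ltac:(assumption) ltac:(assumption) ltac:(assumption)) [-> ->] //|?] := eqVneq (a%:Z - b%:Z + d%:Z - c%:Z) 0
   | |- (?a, ?p, ?b) = (?c, ?p, ?d) => 
       have [/(sid a b c d ltac:(assumption) ltac:(assumption) ltac:(assumption) ltac:(assumption) ltac:(assumption) ltac:(assumption)) [-> ->] //|?] := eqVneq (a%:Z - b%:Z + d%:Z - c%:Z) 0
   | |- (?a, ?b, ?p) = (?c, ?d, ?p) => 
       have [/(sid a b c d ltac:(assumption) ltac:(assumption) ltac:(assumption) ltac:(assumption) ltac:(assumption) ltac:(assumption)) [-> ->] //|?] := eqVneq (a%:Z - b%:Z + d%:Z - c%:Z) 0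
   end).
all: exfalso.
all: clear old3 sid HK HS; repeat match goal with H : S _ |- _ => clear H end.
all: time nia.
Qed.

Lemma newsid (x K : nat) (S : nat -> Prop)
  (sid : forall m1 m2 n1 n2 : nat, S m1 -> S m2 -> m1 != m2 -> S n1 -> S n2 -> n1 != n2 ->
    (m1%:Z - m2%:Z + n2%:Z - n1%:Z = 0) -> (m1, m2) = (n1, n2))
  (HK : forall v, S v -> (v <= K)%N) (Hx : (2*K*K + 2*K < x)%N) :
  forall m1 m2 n1 n2 : nat, m1 = x \/ S m1 -> m2 = x \/ S m2 -> m1 != m2 ->
    n1 = x \/ S n1 -> n2 = x \/ S n2 -> n1 != n2 ->
    (m1%:Z - m2%:Z + n2%:Z - n1%:Z = 0) -> (m1, m2) = (n1, n2).
Proof.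
have HS : forall v, v = x \/ S v -> v = x \/ (S v /\ (v <= K)%N).
  by move=> v [->|h]; [left|right; split => //; apply: HK].
move=> m1 m2 n1 n2 /HS [->|[hm1 b1]] /HS [->|[hm2 b2]] d12
  /HS [->|[hn1 c1]] /HS [->|[hn2 c2]] e12 E;
  rewrite ?eqxx in d12 e12 |- *; try discriminate.
all: try (by apply: (sid _ _ _ _ hm1 hm2 d12 hn1 hn2 e12 E)).
all: clear sid HK HS; apply/eqP; rewrite ?xpair_eqE; lia.
Qed.
End Aux.

Local Open Scope fset_scope.

Lemma seq_bound (s : seq nat) : exists K, forall m, m \in s -> (m <= K)%N.
Proof.
elim: s => [|a s [K HK]]; first by exists 0%N.
exists (maxn a K) => m; rewrite inE => /orP [/eqP ->|/HK]; lia.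
Qed.

Theorem lemma2p4 (M : {fset nat}) :
  (forall m, m \in M -> (0 < m)%N) ->
  strongly_three_separating M ->
  exists x : nat, (0 < x)%N /\ x \notin M /\ strongly_three_separating (x |` M).
Proof.
move=> _ [[card3 old3] sid].
have [K HK] := seq_bound M.
have : exists x, (2*K*K + 2*K < x)%N by exists (2*K*K+2*K).+1.
move=> [x Hx].
have xM : x \notin M by apply/negP => /HK; lia.
have old3' := fun m1 m2 m3 n1 n2 n3 h1 h2 h3 d1 d2 d3 h4 h5 h6 d4 d5 d6 =>
  proj1 (old3 m1 m2 m3 n1 n2 n3 h1 h2 h3 d1 d2 d3 h4 h5 h6 d4 d5 d6).
have sid' := fun m1 m2 n1 n2 h1 h2 d1 h3 h4 d2 =>
  proj1 (sid m1 m2 n1 n2 h1 h2 d1 h3 h4 d2).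
exists x; split; first lia. split => //.
split; first split.
- by rewrite cardfsU1 xM; lia.
- move=> m1 m2 m3 n1 n2 n3 /fset1UP hm1 /fset1UP hm2 /fset1UP hm3 d12 d13 d23
    /fset1UP hn1 /fset1UP hn2 /fset1UP hn3 e12 e13 e23; split.
    exact: (@new3 x K (fun v => v \in M) old3' sid' HK Hx _ _ _ _ _ _ hm1 hm2 hm3 d12 d13 d23 hn1 hn2 hn3 e12 e13 e23).
  by case=> -> -> ->; ring.
- move=> m1 m2 n1 n2 /fset1UP hm1 /fset1UP hm2 d12 /fset1UP hn1 /fset1UP hn2 e12; split.
    exact: (@newsid x K (fun v => v \in M) sid' HK Hx _ _ _ _ hm1 hm2 d12 hn1 hn2 e12).
  by case=> -> ->; ring.
Qed.
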